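(* Let $X$ be a CFG-space over a Boolean ring $B$, $0\in X$, and let $U\subseteq X$ with $0\in U$ be a CFG-space. Then $U^{\perp}=\{x\in X: x\perp y \text{ for all } y\in U\}$ is a CFG-space, and every element of $X$ is a convex combination of elements of $U\cup U^{\perp}$.
   Context: $B$ is a Boolean ring ($a\vee b=a+b+ab$, $a\le b\iff ab=a$; $a_1\oplus\cdots\oplus a_n$ denotes a sum of pairwise disjoint elements). A Boolean metric space over $B$: set $X$ with $d:X\times X\to B$, $d(x,y)=0\iff x=y$, symmetric, $d(x,z)\le d(x,y)\vee d(y,z)$. For $x_1,\dots,x_n\in X$, $a_i\in B$ with $a_1\oplus\cdots\oplus a_n=1$, $x$ is a convex combination of the $x_i$ with coefficients $a_i$ if $a_id(x,x_i)=0$ for all $i$. A CFG-space is a space in which all such combinations exist and every element is a convex combination of elements of some fixed finite subset. In the pointed space $(X,0)$, $|x|=d(0,x)$, and $x\perp y$ (orthogonal) means $d(x,y)=|x|\vee|y|$. *)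

(* Defs.v *)
From HB Require Import structures.
From mathcomp Require Import all_boot all_algebra.
Set Implicit Arguments. Unset Strict Implicit. Unset Printing Implicit Defensive.
Import GRing.Theory.
Local Open Scope ring_scope.

Definition boolean_ring (B : comPzRingType) : Prop := forall a : B, a * a = a.

Definition bjoin (B : comPzRingType) (a b : B) : B := a + b + a * b.

Definition ble (B : comPzRingType) (a b : B) : Prop := a * b = a.

Definition bmetric (B : comPzRingType) (X : Type) (d : X -> X -> B) : Prop :=
  (forall x y, d x y = 0 <-> x = y) /\
  (forall x y, d x y = d y x) /\
  (forall x y z, ble (d x z) (bjoin (d x y) (d y z))).

Definition bpartition (B : comPzRingType) (n : nat) (a : 'I_n -> B) : Prop :=
  (forall i j : 'I_n, i != j -> a i * a j = 0) /\ \sum_(i < n) a i = 1.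

Definition convcomb (B : comPzRingType) (X : Type) (d : X -> X -> B)
  (n : nat) (xs : 'I_n -> X) (a : 'I_n -> B) (x : X) : Prop :=
  forall i : 'I_n, a i * d x (xs i) = 0.

Definition convcomb_of (B : comPzRingType) (X : Type) (d : X -> X -> B)
  (S : X -> Prop) (x : X) : Prop :=
  exists n (xs : 'I_n -> X) (a : 'I_n -> B),
    (forall i, S (xs i)) /\ bpartition a /\ convcomb d xs a x.

(* The subset U of the Boolean metric space (X, d), with the restricted metric,
   is a CFG-space: all convex combinations of elements of U exist in U, and
   every element of U is a convex combination of elements of a fixed finite
   subset {f 0, ..., f (m-1)} of U. *)
Definition CFG (B : comPzRingType) (X : Type) (d : X -> X -> B) (U : X -> Prop)
  : Prop :=
  (forall n (xs : 'I_n -> X) (a : 'I_n -> B),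
      (forall i, U (xs i)) -> bpartition a ->
      exists x, U x /\ convcomb d xs a x) /\
  (exists m (f : 'I_m -> X), (forall j, U (f j)) /\
      forall x, U x -> convcomb_of d (fun y => exists j, y = f j) x).

Definition bnorm (B : comPzRingType) (X : Type) (d : X -> X -> B) (o x : X) : B :=
  d o x.

Definition orth (B : comPzRingType) (X : Type) (d : X -> X -> B) (o x y : X)
  : Prop := d x y = bjoin (bnorm d o x) (bnorm d o y).

Definition perp (B : comPzRingType) (X : Type) (d : X -> X -> B) (o : X)
  (U : X -> Prop) : X -> Prop := fun x => forall y, U y -> orth d o x y.

(* Main.v *)
Require Import Defs.
From HB Require Import structures.
From mathcomp Require Import all_boot all_algebra.
Set Implicit Arguments. Unset Strict Implicit. Unset Printing Implicit Defensive.
Import GRing.Theory.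
Local Open Scope ring_scope.

Lemma br_2 (B : comPzRingType) (hB : boolean_ring B) (a : B) : a + a = 0.
Proof.
have := hB (a + a); rewrite mulrDl !mulrDr hB.
move=> h; apply: (@addrI _ (a + a)); rewrite addr0 -{3}h.
by rewrite !addrA.
Qed.

Lemma br_c1 (B : comPzRingType) (hB : boolean_ring B) (c : B) : c * (1 - c) = 0.
Proof. by rewrite mulrBr mulr1 hB subrr. Qed.

Lemma cJ0 (B : comPzRingType) (c p q : B) : c * p = 0 -> c * bjoin p q = c * q.
Proof. by move=> h; rewrite /bjoin !mulrDr h mulrA h mul0r add0r addr0. Qed.

Lemma cJ1 (B : comPzRingType) (hB : boolean_ring B) (c p q : B) :
  c * p = c -> c * bjoin p q = c.
Proof.
move=> h; rewrite /bjoin !mulrDr h mulrA h -addrA br_2 // addr0 //.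
Qed.

Lemma cJe (B : comPzRingType) (c p p' q : B) :
  c * p = c * p' -> c * bjoin p q = c * bjoin p' q.
Proof. by move=> h; rewrite /bjoin !mulrDr h mulrA h mulrA. Qed.

Lemma split_ext (B : comPzRingType) (r y z : B) :
  r * y = r * z -> (1 - r) * y = (1 - r) * z -> y = z.
Proof.
move=> h1 h2.
by rewrite -(mul1r y) -(mul1r z) -(subrK r 1) (mulrDl _ r y) (mulrDl _ r z) h1 h2.
Qed.

Lemma part_ext (B : comPzRingType) n (a : 'I_n -> B) (y z : B) :
  bpartition a -> (forall i, a i * y = a i * z) -> y = z.
Proof.
move=> [_ hs] h.
by rewrite -(mul1r y) -(mul1r z) -hs !mulr_suml; apply: eq_bigr => i _.
Qed.

Lemma dxx (B : comPzRingType) X (d : X -> X -> B) : bmetric d -> forall x, d x x = 0.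
Proof. by move=> [h _] x; apply/h. Qed.

Lemma key (B : comPzRingType) X (d : X -> X -> B) : bmetric d ->
  forall c x y z, c * d x y = 0 -> c * d x z = c * d y z.
Proof.
move=> [h0 [hs ht]] c x y z h.
have e1 : c * d x z = c * d x z * d y z.
  by rewrite -{1}(ht x y z) /ble mulrCA (cJ0 _ h) mulrCA mulrA.
have e2 : c * d y z = c * d y z * d x z.
  have h' : c * d y x = 0 by rewrite hs.
  by rewrite -{1}(ht y x z) /ble mulrCA (cJ0 _ h') mulrCA mulrA.
by rewrite e1 e2 -mulrA (mulrC (d x z)) mulrA.
Qed.
Definition Pr (B : comPzRingType) (t : nat -> B) n := \prod_(i < n) (1 - t i).

Lemma Pr_S (B : comPzRingType) (t : nat -> B) n : Pr t n.+1 = Pr t n * (1 - t n).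
Proof. by rewrite /Pr big_ord_recr. Qed.

Lemma Pr_t (B : comPzRingType) (hB : boolean_ring B) (t : nat -> B) n j :
  (j < n)%N -> Pr t n * t j = 0.
Proof.
elim: n => [//|n IH]; rewrite ltnS leq_eqVlt => /orP[/eqP->|hj].
  by rewrite Pr_S -mulrA (mulrC _ (t n)) br_c1 // mulr0.
by rewrite Pr_S mulrAC IH // mul0r.
Qed.

Lemma Pr_c (B : comPzRingType) (t : nat -> B) n c :
  (forall l, (l < n)%N -> c * (1 - t l) = c) -> c * Pr t n = c.
Proof.
elim: n => [|n IH] h; first by rewrite /Pr big_ord0 mulr1.
by rewrite Pr_S mulrA IH ?h // => l hl; apply: h; apply: ltnW.
Qed.

Lemma tele (B : comPzRingType) (t : nat -> B) n :
  \sum_(i < n) t i * Pr t i + Pr t n = 1.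
Proof.
elim: n => [|n IH]; first by rewrite big_ord0 /Pr big_ord0 add0r.
rewrite big_ord_recr /= Pr_S mulrBr mulr1 (mulrC (Pr t n)) -addrA.
by rewrite (addrCA (t n * Pr t n)) subrr addr0 IH.
Qed.

Definition tpart (B : comPzRingType) (t : nat -> B) k (i : 'I_k.+1) : B :=
  if (i < k)%N then t i * Pr t i else Pr t k.

Lemma tpart_ok (B : comPzRingType) (hB : boolean_ring B) (t : nat -> B) k :
  bpartition (tpart t (k:=k)).
Proof.
split; last first.
  rewrite big_ord_recr /= /tpart ltnn -(tele t k); congr (_ + _).
  apply: eq_bigr => i _.
  by have -> : (widen_ord (leqnSn k) i < k)%N = true by exact: ltn_ord i.
have gen : forall i j : 'I_k.+1, (i < j)%N -> tpart t i * tpart t j = 0.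
  move=> i j hij.
  have hik : (i < k)%N by apply: (leq_trans hij); rewrite -ltnS.
  have [c hc] : exists c, tpart t j = c * Pr t j.
    rewrite /tpart; case: ifP => hjk; first by exists (t j).
    exists 1; rewrite mul1r; congr Pr; apply/eqP.
    have := ltn_ord j; rewrite ltnS leq_eqVlt hjk orbF => /eqP->; done.
  rewrite hc /tpart hik.
  have e := Pr_t hB t hij.
  rewrite -mulrA mulrCA [t i * _]mulrCA (mulrC (t i)) e.
  by rewrite !mulr0.
move=> i j; rewrite neq_ltn => /orP[h|h]; first exact: gen.
by rewrite mulrC; apply: gen.
Qed.

Lemma dsym (B : comPzRingType) X (d : X -> X -> B) : bmetric d -> forall x y, d x y = d y x.
Proof. by move=> [_ [h _]]. Qed.

Lemma perp_of (B : comPzRingType) X (d : X -> X -> B) (o : X) (U : X -> Prop) :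
  boolean_ring B -> bmetric d -> U o ->
  forall y r p, (forall u, U u -> r * d y u = r) -> r * d p y = 0 ->
  (1 - r) * d p o = 0 -> perp d o U p.
Proof.
move=> hB hd hUo y r p hr h1 h2 u hu; rewrite /orth /bnorm.
apply: (split_ext (r := r)).
  rewrite (key hd _ h1) hr //.
  rewrite (cJ1 hB (c:=r)) // (dsym hd o p) (key hd _ h1) hr //.
rewrite (key hd _ h2) cJ0 //. by rewrite (dsym hd o p).
Qed.

Definition tg (B : comPzRingType) X (d : X -> X -> B) k (g : 'I_k -> X) (y : X)
  (i : nat) : B := oapp (fun j => 1 - d y (g j)) 0 (insub i).

Lemma tgE (B : comPzRingType) X (d : X -> X -> B) k (g : 'I_k -> X) y (j : 'I_k) :
  tg d g y j = 1 - d y (g j).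
Proof. by rewrite /tg valK. Qed.

Lemma r_le (B : comPzRingType) X (d : X -> X -> B) k (g : 'I_k -> X) y :
  boolean_ring B -> forall j : 'I_k, Pr (tg d g y) k * d y (g j) = Pr (tg d g y) k.
Proof.
move=> hB j; have := Pr_t hB (tg d g y) (ltn_ord j).
rewrite tgE mulrBr mulr1 => /subr0_eq; done.
Qed.

Lemma r_leU (B : comPzRingType) X (d : X -> X -> B) (U : X -> Prop) k (g : 'I_k -> X) y :
  boolean_ring B -> bmetric d ->
  (forall x, U x -> convcomb_of d (fun y => exists j, y = g j) x) ->
  forall u, U u -> Pr (tg d g y) k * d y u = Pr (tg d g y) k.
Proof.
move=> hB hd hg u hu; have [n [xs [b [hxs [hb hc]]]]] := hg u hu.
apply: (part_ext hb) => i.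
rewrite mulrCA (dsym hd y u) (key hd _ (hc i)) (dsym hd (xs i) y) mulrCA.
have [j e] := hxs i; by rewrite e r_le.
Qed.

Lemma proj_ex (B : comPzRingType) X (d : X -> X -> B) :
  boolean_ring B -> CFG d (fun _ => True) ->
  forall (o y : X) (r : B), exists p, r * d p y = 0 /\ (1 - r) * d p o = 0.
Proof.
move=> hB [hX1 _] o y r.
pose xs := fun i : 'I_2 => if val i == 0%N then y else o.
pose a := fun i : 'I_2 => if val i == 0%N then r else 1 - r.
have ha : bpartition a.
  split.
    move=> [[|[|i]] hi] [[|[|j]] hj] //= _; rewrite /a /=.
    - exact: br_c1.
    - by rewrite mulrC br_c1.
  by rewrite !big_ord_recr big_ord0 /= add0r /a /= addrC subrK.
have [p [_ hp]] := hX1 2 xs a (fun _ => I) ha.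
exists p; split; [exact: (hp ord0) | exact: (hp (@Ordinal 2 1 isT))].
Qed.

Theorem mainTheorem9 (B : comPzRingType) (X : Type) (d : X -> X -> B) (o : X)
  (U : X -> Prop) :
  boolean_ring B -> bmetric d -> CFG d (fun _ => True) ->
  U o -> CFG d U ->
  CFG d (perp d o U) /\
  (forall x : X, convcomb_of d (fun y => U y \/ perp d o U y) x).
Proof.
move=> hB hd hX hUo [hU1 [k [g [hgU hg]]]].
have hX' := hX; move: hX' => [hX1 [mX [fX [_ hfX]]]].
pose R := fun y => Pr (tg d g y) k.
have hR : forall y u, U u -> R y * d y u = R y := fun y => r_leU y hB hd hg.
have hproj : forall y, exists p, R y * d p y = 0 /\ (1 - R y) * d p o = 0.
  by move=> y; apply: proj_ex.
have hpp : forall y p, R y * d p y = 0 -> (1 - R y) * d p o = 0 -> perp d o U p.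
  by move=> y p; apply: (perp_of hB hd hUo (hR y)).
split.
  split.
    move=> n xs a hxs ha; have [x [_ hx]] := hX1 n xs a (fun _ => I) ha.
    exists x; split => // u hu; rewrite /orth /bnorm.
    apply: (part_ext ha) => i.
    rewrite (key hd _ (hx i)) (cJe _ (p' := d o (xs i))); first by rewrite hxs.
    by rewrite (dsym hd o x) (key hd _ (hx i)) (dsym hd (xs i) o).
  have [q hq] := fin_all_exists (fun j : 'I_mX => hproj (fX j)).
  exists mX, q; split.
    by move=> j; apply: (hpp (fX j) (q j)); case: (hq j).
  move=> x hx.
  have [n [xs [a [hxs [ha hc]]]]] := hfX x I.
  have [J hJ] := fin_all_exists hxs.
  exists n, (fun i => q (J i)), a; split; first by move=> i; exists (J i).
  split => // i.
  have hci := hc i; rewrite hJ in hci.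
  have [h1 h2] := hq (J i).
  set y := fX (J i) in hci h1 h2 *.
  set r := R y in h1 h2 *.
  apply: (split_ext (r := r)); rewrite mulr0.
    rewrite mulrCA (dsym hd x) (key hd _ h1) (dsym hd y x) mulrCA hci.
    by rewrite mulr0.
  rewrite mulrCA (dsym hd x) (key hd _ h2) mulrCA.
  have hc' : a i * d o x * r = a i * d o x.
    apply: Pr_c => l hl.
    have -> : l = val (Ordinal hl) by [].
    rewrite tgE opprB addrC subrK.
    rewrite mulrAC -mulrA mulrA -(key hd _ hci) (hx _ (hgU _)).
    by rewrite mulrAC -mulrA (cJ1 hB (c := d o x)).
  by rewrite mulrBl mul1r (mulrC r) hc' subrr.
move=> x; have [p [h1 h2]] := hproj x.
exists k.+1, (fun i : 'I_k.+1 => if (i < k)%N then oapp g o (insub (val i)) else p).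
exists (tpart (tg d g x) (k := k)); split.
  move=> i; case: ifP => hi.
    by case: insubP => [j _ _|hn] /=; left; [exact: hgU | exact: hUo].
  by right; apply: (hpp x p h1 h2).
split; first exact: tpart_ok.
move=> i; rewrite /tpart; case: ifP => hi.
  case: insubP => [j _ ej|hn] /=; last by rewrite hi in hn.
  rewrite -ej tgE mulrAC mulrBl mul1r hB subrr mul0r //.
by rewrite (dsym hd x p) h1.
Qed.
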